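(* Let $N\ge 2$ and $L\ge 2$ be integers. There is no bijection $h:\mathbb{Z}/N^L\mathbb{Z}\to(\mathbb{Z}/N\mathbb{Z})^L$ together with a binary operation $g:\mathbb{Z}/N\mathbb{Z}\times\mathbb{Z}/N\mathbb{Z}\to\mathbb{Z}/N\mathbb{Z}$ such that $h(ab)_i=g(h(a)_i,h(b)_i)$ for all $a,b\in\mathbb{Z}/N^L\mathbb{Z}$ and all $i\in\{1,\ldots,L\}$ (here $ab$ is the product in the ring $\mathbb{Z}/N^L\mathbb{Z}$ and $h(a)_i$ the $i$-th coordinate of $h(a)$). *)

(* Defs.v *)
From mathcomp Require Import all_boot all_order all_algebra.
Set Implicit Arguments. Unset Strict Implicit. Unset Printing Implicit Defensive.

(* Main.v *)
Require Import Defs.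
From mathcomp Require Import all_boot all_order all_algebra.
Set Implicit Arguments. Unset Strict Implicit. Unset Printing Implicit Defensive.
From mathcomp Require Import zify.

Lemma dvdn_from_log m n : 0 < m -> 0 < n ->
  (forall p, prime p -> logn p m <= logn p n) -> m %| n.
Proof.
move=> m0 n0 H.
have g0 : 0 < gcdn m n by rewrite gcdn_gt0 m0.
have -> : m = gcdn m n.
  apply: eqn_from_log => // p.
  rewrite logn_gcd //.
  case: (boolP (prime p)) => pp.
    by rewrite (minn_idPl (H p pp)).
  by rewrite /logn (negbTE pp).
exact: dvdn_gcdr.
Qed.

Lemma logn_prod_primes (s : seq nat) q : uniq s -> all prime s ->
  logn q (\prod_(p <- s) p) = (q \in s) /\ 0 < \prod_(p <- s) p.
Proof.
elim: s => [|x s IH] /=; first by rewrite big_nil logn1.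
move=> /andP[xs us] /andP[px ps].
have [IH1 IH2] := IH us ps.
have x0 := prime_gt0 px.
rewrite big_cons lognM // IH1 logn_prime // in_cons; split; last by rewrite muln_gt0 x0.
case: eqVneq => [->|_] //=.
by rewrite (negbTE xs).
Qed.

Definition rad N := \prod_(p <- primes N) p.

Lemma rad_log N q : logn q (rad N) = (q \in primes N).
Proof. by case: (logn_prod_primes q (primes_uniq N) (all_prime_primes N)). Qed.

Lemma rad_gt0 N : 0 < rad N.
Proof. by case: (logn_prod_primes 0 (primes_uniq N) (all_prime_primes N)). Qed.

Lemma rad_dvd N L : 0 < N -> 0 < L -> rad N %| N ^ L.
Proof.
move=> N0 L0; apply: dvdn_from_log; first exact: rad_gt0.
  by rewrite expn_gt0 N0.
move=> p pp.
rewrite rad_log lognX -logn_gt0.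
case: (posnP (logn p N)) => [->|h]; first by rewrite muln0.
by rewrite muln_gt0 L0.
Qed.

Lemma nil_iff N L a : 0 < N -> 0 < L ->
  (N ^ L %| a ^ (L * N)) = (rad N %| a).
Proof.
move=> N0 L0.
case: (posnP a) => [->|a0].
  by rewrite exp0n ?muln_gt0 ?N0 ?L0 // !dvdn0.
apply/idP/idP => H.
  apply: dvdn_from_log => // [|p pp]; first exact: rad_gt0.
  rewrite rad_log; case: (boolP (p \in primes N)) => // pN.
  rewrite logn_gt0 mem_primes pp a0 /=.
  have : p %| a ^ (L * N).
    apply: (dvdn_trans _ H); apply: dvdn_exp => //.
    by move: pN; rewrite mem_primes => /and3P[_ _ ->].
  by rewrite Euclid_dvdX // => /andP[].
have [b ->] := dvdnP H.
rewrite expnMn dvdn_mull //.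
apply: dvdn_from_log; rewrite ?expn_gt0 ?N0 ?rad_gt0 // => p pp.
rewrite !lognX rad_log.
case: (boolP (p \in primes N)) => pN; last first.
  have : logn p N = 0 by apply/eqP; rewrite -leqn0 leqNgt logn_gt0.
  by move=> ->; rewrite muln0.
rewrite muln1 leq_mul2l ltnW ?orbT // ltn_logl //.
Qed.

Lemma card_ord_pred n (P : pred nat) : #|[pred a : 'I_n | P a]| = count P (iota 0 n).
Proof.
by rewrite cardE /enum_mem size_filter -val_enum_ord count_map enumT.
Qed.

Lemma count_sum (s : seq nat) (P : pred nat) : count P s = \sum_(i <- s) P i.
Proof. by elim: s => [|x s IH] /=; rewrite ?big_nil ?big_cons ?IH. Qed.

Lemma count_dvd r M : 0 < M -> r %| M -> count (dvdn r) (iota 0 M) = M %/ r.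
Proof.
move=> M0 rM; rewrite divn_count_dvd count_sum.
case: M M0 rM => // m _ rM.
rewrite /index_iota subSS subn0 /= big_cons dvdn0.
have E : iota 1 m.+1 = iota 1 m ++ [:: m.+1] by rewrite -[m.+1]addn1 iotaD /= add1n addn1.
rewrite -[1 :: iota 2 m]/(iota 1 m.+1) E big_cat /= big_cons big_nil rM.
by rewrite addn0 addnC.
Qed.

Lemma arith_end (L x y : nat) : 1 < L -> L * x + true = L * y -> False.
Proof.
move=> hL H.
have H' : L * x + 1 = L * y by rewrite -H.
have L0 : 0 < L by apply: ltnW.
have xy : x < y by rewrite -(ltn_pmul2l L0) -H' addn1.
have : L * x.+1 <= L * y by rewrite leq_mul2l xy orbT.
rewrite mulnS -H' addnC leq_add2l.
by rewrite leqNgt hL.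
Qed.

Import GRing.Theory.
Local Open Scope ring_scope.

Theorem mainTheorem16 (N L : nat) (hN : (2 <= N)%N) (hL : (2 <= L)%N) :
  ~ exists (h : 'Z_(N ^ L) -> {ffun 'I_L -> 'Z_N}) (g : 'Z_N -> 'Z_N -> 'Z_N),
      bijective h /\
      (forall (a b : 'Z_(N ^ L)) (i : 'I_L), h (a * b) i = g (h a i) (h b i)).
Proof.
move=> [h [g [hb hm]]].
have N0 : (0 < N)%N by apply: leq_trans hN.
have L0 : (0 < L)%N by apply: leq_trans hL.
have M1 : (1 < N ^ L)%N.
  by apply: (leq_trans hN); rewrite -{1}(expn1 N) leq_pexp2l.
have M0 : (0 < N ^ L)%N by apply: ltnW.
case: hb => hi hK hiK.
have hinj := can_inj hK.
pose i0 : 'I_L := Ordinal L0.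
pose z := h 0 i0.
have h0 : forall i, h 0 i = z.
  move=> i.
  have e1 := hm (hi [ffun=> z]) 0 i; rewrite mulr0 hiK ffunE in e1.
  have e2 := hm 0 (hi [ffun=> h 0 i]) i0; rewrite mul0r hiK ffunE in e2.
  by rewrite e1; exact: esym e2.
have hX : forall a k i, h (a ^+ k.+1) i = iter k (g (h a i)) (h a i).
  move=> a k i; elim: k => [|k IH]; first by rewrite expr1.
  by rewrite exprS hm IH.
have K0 : (0 < L * N)%N by rewrite muln_gt0 L0 N0.
pose T := [pred x : 'Z_N | iter (L * N).-1 (g x) x == z].
have hS : forall a : 'Z_(N ^ L), (a ^+ (L * N) == 0) = [forall i, h a i \in T].
  move=> a; rewrite -(prednK K0).
  apply/eqP/forallP => [E i|H].
    by rewrite inE -hX E h0.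
  apply: hinj; apply/ffunP => i; rewrite h0 hX.
  by have := H i; rewrite inE => /eqP.
have c1 : #|[pred a : 'Z_(N ^ L) | a ^+ (L * N) == 0]| = (#|T| ^ L)%N.
  rewrite -(card_image hinj).
  rewrite -[L in RHS]card_ord -card_ffun_on.
  apply: eq_card => f.
  rewrite -{1}(hiK f) mem_image // !inE hS hiK.
  by apply/forallP/ffun_onP.
have c2 : #|[pred a : 'Z_(N ^ L) | a ^+ (L * N) == 0]| = (N ^ L %/ rad N)%N.
  rewrite -(count_dvd M0 (rad_dvd N0 L0)).
  rewrite -[X in iota 0 X](Zp_cast M1) -card_ord_pred.
  apply: eq_card => a; rewrite !inE.
  have E : a ^+ (L * N) = (((val a) ^ (L * N))%N)%:R by rewrite natrX natr_Zp.
  rewrite E -val_eqE /= val_Zp_nat //.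
  exact: (nil_iff _ N0 L0).
have E : (#|T| ^ L * rad N)%N = (N ^ L)%N.
  by rewrite -c1 c2 divnK // rad_dvd.
have t0 : (0 < #|T|)%N.
  case: (posnP #|T|) => // t0; move: E; rewrite t0 exp0n //.
  by move=> E; move: M0; rewrite -E.
pose p := pdiv N.
have pp : prime p by apply: pdiv_prime.
have pN : p \in primes N by rewrite mem_primes pp N0 pdiv_dvd.
have := congr1 (logn p) E.
rewrite lognM ?expn_gt0 ?t0 ?rad_gt0 // !lognX rad_log pN.
move: (logn p #|T|) (logn p N) => x y H.
exact: (arith_end hL H).
Qed.
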